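(* Let $C$ be a finite set. Let $\mathbb P$ be a probability measure on $\{0,1\}^C$ of the form $\bigotimes_{i\in C}\mathrm{Bernoulli}(p_i)$. Let $\mathcal E_1$ and $\mathcal E_2$ be two increasing subsets of $\{0,1\}^C$. Let $\mathbf P$ be a probability measure on $\{0,1\}^{C\times\{1,2\}}$ of the form $\bigotimes_{i\in C}\rho_i$, where each $\rho_i$ is a probability measure on $\{0,1\}^{\{i\}\times\{1,2\}}\cong\{0,1\}^2$ both of whose marginals are Bernoulli distributions of parameter at least $p_i$. Then $\mathbb P(\mathcal E_1\circ\mathcal E_2)\le \mathbf P(\mathcal E_1\times\mathcal E_2)$, where $\mathcal E_1\times\mathcal E_2$ denotes the set of $\omega\in\{0,1\}^{C\times\{1,2\}}$ with $(\omega_{(i,1)})_{i\in C}\in\mathcal E_1$ and $(\omega_{(i,2)})_{i\in C}\in\mathcal E_2$.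
   Context: A subset $\mathcal E\subset\{0,1\}^C$ is increasing if $\omega\in\mathcal E$ and $\omega\le\omega'$ coordinatewise imply $\omega'\in\mathcal E$. The disjoint occurrence $\mathcal E_1\circ\mathcal E_2$ is the set of $\omega\in\{0,1\}^C$ for which there exist disjoint subsets $P_1,P_2\subset C$ such that, for $j\in\{1,2\}$, every $\omega'\in\{0,1\}^C$ agreeing with $\omega$ on $P_j$ belongs to $\mathcal E_j$. *)

(* Defs.v *)
From mathcomp Require Import all_boot all_order all_algebra.
Set Implicit Arguments. Unset Strict Implicit. Unset Printing Implicit Defensive.
Import Order.TTheory GRing.Theory Num.Theory.
Local Open Scope ring_scope.

Definition config (C : finType) := {ffun C -> bool}.

Definition increasing (C : finType) (E : {set config C}) : Prop :=
  forall w w' : config C, w \in E -> (forall i, w i <= w' i)%N -> w' \in E.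

Definition disj_occ (C : finType) (E1 E2 : {set config C}) : {set config C} :=
  [set w : config C | [exists P1 : {set C}, exists P2 : {set C},
     [disjoint P1 & P2] &&
     [forall w' : config C, [forall i in P1, w' i == w i] ==> (w' \in E1)] &&
     [forall w' : config C, [forall i in P2, w' i == w i] ==> (w' \in E2)]]].

Definition bern_prod (R : numDomainType) (C : finType) (p : C -> R)
  (E : {set config C}) : R :=
  \sum_(w in E) \prod_(i : C) (if w i then p i else 1 - p i).

(* configurations on C x {1,2}; index 1 is ord0, index 2 is ord_max *)
Definition config2 (C : finType) := {ffun (C * 'I_2) -> bool}.

Definition proj1c (C : finType) (w : config2 C) : config C :=
  [ffun i => w (i, ord0)].
Definition proj2c (C : finType) (w : config2 C) : config C :=
  [ffun i => w (i, ord_max)].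

Definition prod_event (C : finType) (E1 E2 : {set config C}) : {set config2 C} :=
  [set w : config2 C | (proj1c w \in E1) && (proj2c w \in E2)].

(* rho i a b = rho_i(omega_(i,1) = a, omega_(i,2) = b); product measure *)
Definition prod_rho (R : numDomainType) (C : finType) (rho : C -> bool -> bool -> R)
  (F : {set config2 C}) : R :=
  \sum_(w in F) \prod_(i : C) rho i (w (i, ord0)) (w (i, ord_max)).

Definition is_prob2 (R : numDomainType) (r : bool -> bool -> R) : Prop :=
  (forall a b, 0 <= r a b) /\ \sum_(a : bool) \sum_(b : bool) r a b = 1.

(* Main.v *)
Require Import Defs.
From mathcomp Require Import all_boot all_order all_algebra.
From mathcomp Require Import ring lra.
Set Implicit Arguments. Unset Strict Implicit. Unset Printing Implicit Defensive.
Import Order.TTheory GRing.Theory Num.Theory.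
Local Open Scope ring_scope.

Section Gen.
Variables (R : realFieldType) (C B : finType).

Definition upd (w : {ffun C -> B}) (i : C) (b : B) : {ffun C -> B} :=
  [ffun j => if j == i then b else w j].

Lemma upd_id w i : upd w i (w i) = w.
Proof. by apply/ffunP=> j; rewrite ffunE; case: eqP => // ->. Qed.
Lemma upd_upd w i a b : upd (upd w i a) i b = upd w i b.
Proof. by apply/ffunP=> j; rewrite !ffunE; case: eqP. Qed.
Lemma upd_at w i b : upd w i b i = b.
Proof. by rewrite ffunE eqxx. Qed.

Definition sw (c c' x : B) := if x == c then c' else if x == c' then c else x.
Lemma swK c c' : involutive (sw c c').
Proof.
move=> x; rewrite /sw.
have [->|xc] := eqVneq x c; first by rewrite eqxx; case: eqVneq.
have [->|xc'] := eqVneq x c'; first by rewrite eqxx.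
by rewrite (negPf xc) (negPf xc').
Qed.
Lemma sw_eq c c' x : (sw c c' x == c) = (x == c').
Proof.
rewrite /sw; case: (eqVneq x c) => [->|xc].
  by rewrite eq_sym.
case: (eqVneq x c') => [xc1|xc']; first by rewrite eqxx.
exact: negPf. Qed.

Definition mu (h : C -> B -> R) (H : {ffun C -> B} -> R) :=
  \sum_(w : {ffun C -> B}) H w * \prod_j h j (w j).

Lemma sum_fix (M : {ffun C -> B} -> R) i c c' :
  (forall w b, M (upd w i b) = M w) ->
  \sum_(w : {ffun C -> B}) (w i == c)%:R * M w = \sum_(w : {ffun C -> B}) (w i == c')%:R * M w.
Proof.
move=> HM.
pose s w := upd w i (sw c c' (w i)).
have sK : involutive s.
  by move=> w; rewrite /s upd_upd upd_at swK upd_id.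
rewrite (reindex_inj (inv_inj sK)) /=.
by apply: eq_bigr => w _; rewrite /s HM upd_at sw_eq.
Qed.

Lemma sum_ind (F : B -> R) x : \sum_b (x == b)%:R * F b = F x.
Proof.
rewrite (bigD1 x) //= eqxx mul1r big1 ?addr0 // => b /negPf.
by rewrite eq_sym => ->; rewrite mul0r.
Qed.

Lemma lemA (h : C -> B -> R) i (M : {ffun C -> B} -> R) c :
  \sum_b h i b = 1 -> (forall w b, M (upd w i b) = M w) ->
  \sum_(w : {ffun C -> B}) h i (w i) * M w = \sum_(w : {ffun C -> B}) (w i == c)%:R * M w.
Proof.
move=> h1 HM.
transitivity (\sum_(w : {ffun C -> B}) \sum_b h i b * ((w i == b)%:R * M w)).
  apply: eq_bigr => w _; rewrite -(sum_ind (h i) (w i)) big_distrl /=.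
  by apply: eq_bigr => b _; ring.
rewrite exchange_big /=.
transitivity (\sum_b h i b * \sum_(w : {ffun C -> B}) (w i == c)%:R * M w).
  apply: eq_bigr => b _; rewrite -big_distrr /=; congr (_ * _).
  exact: sum_fix.
by rewrite -big_distrl /= h1 mul1r.
Qed.

Lemma lemD (h : C -> B -> R) i (H : {ffun C -> B} -> R) :
  \sum_b h i b = 1 ->
  mu h H = \sum_b h i b * mu h (fun w => H (upd w i b)).
Proof.
move=> h1; rewrite /mu.
pose K (w : {ffun C -> B}) := \prod_(j | j != i) h j (w j).
have KE (w : {ffun C -> B}) : \prod_j h j (w j) = h i (w i) * K w by rewrite (bigD1 i).
have Kinv (w : {ffun C -> B}) b : K (upd w i b) = K w.
  by apply: eq_bigr => j /negPf ji; rewrite ffunE ji.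
transitivity (\sum_(w : {ffun C -> B}) \sum_b (w i == b)%:R * (h i b * (H (upd w i b) * K w))).
  apply: eq_bigr => w _; rewrite sum_ind KE upd_id; ring.
rewrite exchange_big /=; apply: eq_bigr => b _.
rewrite big_distrr /=.
transitivity (h i b * \sum_(w : {ffun C -> B}) (w i == b)%:R * (H (upd w i b) * K w)).
  rewrite big_distrr /=; apply: eq_bigr => w _; ring.
rewrite -(@lemA h i (fun w => H (upd w i b) * K w) b h1); last first.
  by move=> w a; rewrite upd_upd Kinv.
rewrite big_distrr /=; apply: eq_bigr => w _; rewrite KE; ring.
Qed.

Lemma mu_le (h : C -> B -> R) (H H' : {ffun C -> B} -> R) :
  (forall j b, 0 <= h j b) -> (forall w, H w <= H' w) -> mu h H <= mu h H'.
Proof.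
move=> h0 HH; apply: ler_sum => w _; apply: ler_wpM2r => //.
by apply: prodr_ge0 => j _.
Qed.

Lemma mu_ge0 (h : C -> B -> R) (H : {ffun C -> B} -> R) :
  (forall j b, 0 <= h j b) -> (forall w, 0 <= H w) -> 0 <= mu h H.
Proof.
move=> h0 HH; apply: sumr_ge0 => w _; apply: mulr_ge0 => //.
by apply: prodr_ge0 => j _.
Qed.

Lemma muD (h : C -> B -> R) (H H' : {ffun C -> B} -> R) :
  mu h (fun w => H w + H' w) = mu h H + mu h H'.
Proof. by rewrite /mu -big_split /=; apply: eq_bigr => w _; rewrite mulrDl. Qed.

Lemma mu1 (h : C -> B -> R) : (forall j, \sum_b h j b = 1) -> mu h (fun _ => 1) = 1.
Proof.
move=> h1; rewrite /mu.
under eq_bigr do rewrite mul1r.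
rewrite -(bigA_distr_bigA (fun j b => h j b)) /=.
by rewrite big1 // => j _; rewrite h1.
Qed.

End Gen.
Section Main.
Variables (R : realFieldType) (C : finType).

Definition depends (E : {set config C}) (S : {set C}) :=
  forall w w' : config C, (forall j, j \in S -> w j = w' j) -> (w \in E) = (w' \in E).

Definition sec (E : {set config C}) i a : {set config C} :=
  [set w : config C | upd w i a \in E].

Lemma sec_incr E i a : increasing E -> increasing (sec E i a).
Proof.
move=> HE w w'; rewrite !inE => wE le; apply: HE wE _ => j.
by rewrite !ffunE; case: eqP.
Qed.

Lemma sec_mono E i w : increasing E -> w \in sec E i false -> w \in sec E i true.
Proof.
move=> HE; rewrite !inE => wE; apply: HE wE _ => j.
by rewrite !ffunE; case: eqP.
Qed.

Lemma sec_dep E S i a : depends E S -> depends (sec E i a) (S :\ i).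
Proof.
move=> HE w w' ag; rewrite !inE; apply: HE => j jS; rewrite !ffunE.
case: eqP => // /eqP ji; apply: ag; by rewrite !inE ji.
Qed.

Lemma agree_upd (P : {set C}) (w w' : config C) i a b :
  (i \in P -> b = a) -> [forall j in P, w' j == w j] ->
  [forall j in P, upd w' i b j == upd w i a j].
Proof.
move=> hab /forall_inP H; apply/forall_inP => j jP; rewrite !ffunE.
case: (eqVneq j i) => [ji|_]; last exact: H.
by subst j; rewrite hab.
Qed.

Lemma do_sec i a b1 b2 (E1 E2 : {set config C}) (w : config C) (P1 P2 : {set C}) :
  [disjoint P1 & P2] ->
  [forall w' : config C, [forall j in P1, w' j == upd w i a j] ==> (w' \in E1)] ->
  [forall w' : config C, [forall j in P2, w' j == upd w i a j] ==> (w' \in E2)] ->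
  (i \in P1 -> b1 = a) -> (i \in P2 -> b2 = a) ->
  w \in disj_occ (sec E1 i b1) (sec E2 i b2).
Proof.
move=> dis /forallP H1 /forallP H2 h1 h2.
rewrite inE; apply/existsP; exists P1; apply/existsP; exists P2.
rewrite dis /=; apply/andP; split; apply/forallP => w'; apply/implyP => ag;
  rewrite inE.
  by move/implyP: (H1 (upd w' i b1)); apply; apply: agree_upd.
by move/implyP: (H2 (upd w' i b2)); apply; apply: agree_upd.
Qed.

Lemma sec0 (E1 E2 : {set config C}) i a w : w \in sec (disj_occ E1 E2) i a ->
  w \in disj_occ (sec E1 i a) (sec E2 i a).
Proof.
move=> Hw; rewrite !inE in Hw.
case/existsP: Hw => P1 /existsP [P2 /andP [/andP [dis H1] H2]].
by apply: (do_sec dis H1 H2).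
Qed.

Lemma sec1 (E1 E2 : {set config C}) i w : w \in sec (disj_occ E1 E2) i true ->
  (w \in disj_occ (sec E1 i true) (sec E2 i false)) ||
  (w \in disj_occ (sec E1 i false) (sec E2 i true)).
Proof.
move=> Hw; rewrite !inE in Hw.
case/existsP: Hw => P1 /existsP [P2 /andP [/andP [dis H1] H2]].
case iP2: (i \in P2).
  apply/orP; right; apply: (do_sec dis H1 H2) => // iP1.
  by rewrite (disjointFr dis iP1) in iP2.
by apply/orP; left; apply: (do_sec dis H1 H2) => // iP2'; rewrite iP2' in iP2.
Qed.

Lemma do_mono (E1 E2 F1 F2 : {set config C}) w :
  (forall x, x \in E1 -> x \in F1) -> (forall x, x \in E2 -> x \in F2) ->
  w \in disj_occ E1 E2 -> w \in disj_occ F1 F2.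
Proof.
move=> s1 s2; rewrite !inE => /existsP [P1 /existsP [P2 /andP [/andP [dis H1] H2]]].
apply/existsP; exists P1; apply/existsP; exists P2; rewrite dis /=.
apply/andP; split; apply/forallP => w'; apply/implyP => ag.
  by apply: s1; move/forallP: H1 => /(_ w') /implyP; apply.
by apply: s2; move/forallP: H2 => /(_ w') /implyP; apply.
Qed.

Lemma do_sub (E1 E2 : {set config C}) w : w \in disj_occ E1 E2 -> (w \in E1) && (w \in E2).
Proof.
rewrite !inE => /existsP [P1 /existsP [P2 /andP [/andP [dis H1] H2]]].
move/forallP: H1 => /(_ w) /implyP ->; last by apply/forall_inP.
by move/forallP: H2 => /(_ w) /implyP ->; last by apply/forall_inP.
Qed.

Lemma ind_le (b1 b2 : bool) : (b1 -> b2) -> (b1%:R : R) <= b2%:R.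
Proof. by case: b1; case: b2 => // /(_ isT). Qed.

End Main.
Section Meas.
Variables (R : realFieldType) (C : finType).

Lemma mu_ext (B : finType) (h : C -> B -> R) H H' :
  (forall w, H w = H' w) -> mu h H = mu h H'.
Proof. by move=> e; apply: eq_bigr => w _; rewrite e. Qed.

Lemma sum_pair2 (G : bool * bool -> R) :
  \sum_ab G ab = G (true, true) + G (true, false) + G (false, true) + G (false, false).
Proof.
transitivity (\sum_(ab : bool * bool) (fun a b => G (a, b)) ab.1 ab.2).
  by apply: eq_bigr => -[a b].
rewrite -(pair_bigA _ (fun a b => G (a, b))) /= !big_bool /=.
by rewrite !addrA.
Qed.

Lemma arith (p r11 r10 r01 r00 P00 P10 P01 P11 PU Q00 Q10 Q01 Q11 : R) :
  0 <= r11 -> 0 <= r10 -> 0 <= r01 -> 0 <= r00 -> r11 + r10 + r01 + r00 = 1 ->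
  p <= r11 + r10 -> p <= r11 + r01 ->
  P00 <= P10 -> P00 <= P01 -> PU <= P11 -> PU + P00 <= P10 + P01 -> P00 <= PU ->
  P00 <= Q00 -> P10 <= Q10 -> P01 <= Q01 -> P11 <= Q11 ->
  (1 - p) * P00 + p * PU <= r11 * Q11 + r10 * Q10 + r01 * Q01 + r00 * Q00.
Proof.
move=> h11 h10 h01 h00 hs hp1 hp2 a1 a2 a3 a4 a5 q00 q10 q01 q11.
have e1 : r11 * P11 + r10 * P10 + r01 * P01 + r00 * P00 <=
          r11 * Q11 + r10 * Q10 + r01 * Q01 + r00 * Q00.
  by rewrite !lerD // ler_wpM2l.
apply: le_trans e1.
have -> : r00 = 1 - r11 - r10 - r01 by rewrite -hs; ring.
have [hc|hc] := lerP p r11.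
  have t1 : r11 * PU <= r11 * P11 by rewrite ler_wpM2l.
  have t2 : r10 * P00 <= r10 * P10 by rewrite ler_wpM2l.
  have t3 : r01 * P00 <= r01 * P01 by rewrite ler_wpM2l.
  have t4 : p * (PU - P00) <= r11 * (PU - P00) by rewrite ler_wpM2r // subr_ge0.
  nra.
set d := p - r11.
have d0 : 0 <= d by rewrite subr_ge0 ltW.
have t1 : r11 * PU <= r11 * P11 by rewrite ler_wpM2l.
have t2 : d * (P10 - P00) <= r10 * (P10 - P00) by rewrite ler_wpM2r // ?subr_ge0 // /d; lra.
have t3 : d * (P01 - P00) <= r01 * (P01 - P00) by rewrite ler_wpM2r // ?subr_ge0 // /d; lra.
have t4 : d * (PU - P00) <= d * ((P10 - P00) + (P01 - P00)) by rewrite ler_wpM2l //; lra.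
rewrite /d in t2 t3 t4.
nra.
Qed.

End Meas.
Section Proof.
Variables (R : realFieldType) (C : finType) (p : C -> R)
  (rho : C -> bool -> bool -> R).
Hypothesis hp : forall i, 0 <= p i <= 1.
Hypothesis hr : forall i, is_prob2 (rho i).
Hypothesis m1 : forall i, p i <= rho i true true + rho i true false.
Hypothesis m2 : forall i, p i <= rho i true true + rho i false true.

Definition fw i (b : bool) : R := if b then p i else 1 - p i.
Definition rh i (ab : bool * bool) : R := rho i ab.1 ab.2.
Definition fstc (u : {ffun C -> bool * bool}) : config C := [ffun i => (u i).1].
Definition sndc (u : {ffun C -> bool * bool}) : config C := [ffun i => (u i).2].

Definition LHS (E1 E2 : {set config C}) :=
  mu fw (fun w : config C => (w \in disj_occ E1 E2)%:R).
Definition RHS (E1 E2 : {set config C}) :=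
  mu rh (fun u => ((fstc u \in E1) && (sndc u \in E2))%:R).

Lemma fw0 i b : 0 <= fw i b.
Proof. by case/andP: (hp i) => h0 h1; rewrite /fw; case: b; rewrite ?subr_ge0. Qed.
Lemma fw1 i : \sum_b fw i b = 1.
Proof. by rewrite big_bool /fw /=; ring. Qed.
Lemma rh0 i ab : 0 <= rh i ab.
Proof. by case: (hr i) => h0 _; apply: h0. Qed.
Lemma rh1 i : \sum_ab rh i ab = 1.
Proof.
case: (hr i) => _ <-; rewrite sum_pair2 !big_bool /rh /=; ring.
Qed.

Lemma ind4 (x y z : bool) : (z -> x) -> (z -> y) ->
  ((x || y)%:R + z%:R : R) <= x%:R + y%:R.
Proof.
case: x; case: y; case: z => //= h1 h2; try (by have := h1 isT); try (by have := h2 isT);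
  rewrite ?addr0 ?add0r //; lra.
Qed.

Lemma base (E1 E2 : {set config C}) :
  depends E1 set0 -> depends E2 set0 -> LHS E1 E2 <= RHS E1 E2.
Proof.
move=> d1 d2.
case: (boolP [exists w : config C, w \in disj_occ E1 E2]) => [/existsP [w0 Hw0] | /existsPn none].
  case/andP: (do_sub Hw0) => w1 w2.
  have all1 x : x \in E1 by rewrite -(d1 w0) // => j; rewrite inE.
  have all2 x : x \in E2 by rewrite -(d2 w0) // => j; rewrite inE.
  apply: (@le_trans _ _ (mu fw (fun _ => 1))).
    apply: mu_le; first exact: fw0.
    by move=> w; case: (_ \in _).
  rewrite mu1; last exact: fw1.
  have -> : RHS E1 E2 = mu rh (fun _ => 1) by apply: mu_ext => u; rewrite all1 all2.
  by rewrite mu1 //; exact: rh1.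
have -> : LHS E1 E2 = mu fw (fun _ => 0) by apply: mu_ext => w; rewrite (negPf (none w)).
rewrite /mu big1; last by move=> w _; rewrite mul0r.
apply: mu_ge0; first exact: rh0.
by move=> u; case: (_ && _).
Qed.


Lemma fstc_upd u i (ab : bool * bool) : fstc (upd u i ab) = upd (fstc u) i ab.1.
Proof. by apply/ffunP => j; rewrite !ffunE; case: eqP. Qed.
Lemma sndc_upd u i (ab : bool * bool) : sndc (upd u i ab) = upd (sndc u) i ab.2.
Proof. by apply/ffunP => j; rewrite !ffunE; case: eqP. Qed.

Lemma RHS_dec (E1 E2 : {set config C}) i :
  RHS E1 E2 = \sum_ab rh i ab * RHS (sec E1 i ab.1) (sec E2 i ab.2).
Proof.
rewrite /RHS (lemD _ (rh1 i)); apply: eq_bigr => ab _; congr (_ * _).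
by apply: mu_ext => u; rewrite fstc_upd sndc_upd !inE.
Qed.

Lemma indle (H H' : config C -> bool) :
  (forall w, H w -> H' w) -> mu fw (fun w => (H w)%:R) <= mu fw (fun w => (H' w)%:R).
Proof. by move=> s; apply: mu_le; [exact: fw0 | move=> w; apply: ind_le; apply: s]. Qed.

Lemma main n : forall S : {set C}, (#|S| <= n)%N -> forall E1 E2 : {set config C},
  increasing E1 -> increasing E2 -> depends E1 S -> depends E2 S ->
  LHS E1 E2 <= RHS E1 E2.
Proof.
elim: n => [|n IH] S hS E1 E2 i1 i2 d1 d2.
  move: hS; rewrite leqn0 => /eqP /cards0_eq hS; subst S; exact: base.
case: (set_0Vmem S) => [hS0|[i iS]]; first by subst S; exact: base.
have hS' : (#|S :\ i| <= n)%N by move: hS; rewrite (cardsD1 i S) iS.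
have IHab a b : LHS (sec E1 i a) (sec E2 i b) <= RHS (sec E1 i a) (sec E2 i b).
  apply: (IH (S :\ i)) => //; try exact: sec_incr; exact: sec_dep.
set A := fun a b => disj_occ (sec E1 i a) (sec E2 i b).
set PU := mu fw (fun w => ((w \in A true false) || (w \in A false true))%:R).
have L1 : LHS E1 E2 <= (1 - p i) * LHS (sec E1 i false) (sec E2 i false) + p i * PU.
  rewrite /LHS (lemD _ (fw1 i)) big_bool /fw /= addrC.
  case/andP: (hp i) => h0 h1.
  apply: lerD; apply: ler_wpM2l; rewrite ?subr_ge0 //; apply: indle => w Hw.
    by apply: sec0; rewrite inE.
  by apply: sec1; rewrite inE.
apply: (le_trans L1).
rewrite (RHS_dec _ _ i) sum_pair2 /rh /=.
have s1 : forall x, x \in sec E1 i false -> x \in sec E1 i true by move=> x; exact: sec_mono.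
have s2 : forall x, x \in sec E2 i false -> x \in sec E2 i true by move=> x; exact: sec_mono.
case: (hr i) => r0 rs.
set P := fun a b => LHS (sec E1 i a) (sec E2 i b).
have rs' : rho i true true + rho i true false + rho i false true + rho i false false = 1.
  by rewrite -rs !big_bool /=; ring.
have a1 : P false false <= P true false by apply: indle => w; apply: do_mono.
have a2 : P false false <= P false true by apply: indle => w; apply: do_mono.
have a3 : PU <= P true true.
  by apply: indle => w /orP [] ; apply: do_mono.
have a4 : PU + P false false <= P true false + P false true.
  rewrite /PU /P /LHS -!muD; apply: mu_le; first exact: fw0.
  by move=> w; apply: ind4; apply: do_mono.
have a5 : P false false <= PU.
  by apply: indle => w Hw; apply/orP; left; apply: do_mono Hw.
exact: (arith (r0 _ _) (r0 _ _) (r0 _ _) (r0 _ _) rs' (m1 i) (m2 i) a1 a2 a3 a4 a5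
  (IHab _ _) (IHab _ _) (IHab _ _) (IHab _ _)).
Qed.

End Proof.
Section Final.
Variables (R : realFieldType) (C : finType).

Definition gmap (u : {ffun C -> bool * bool}) : config2 C :=
  [ffun x : C * 'I_2 => if x.2 == ord0 then (u x.1).1 else (u x.1).2].
Definition ginv (w : config2 C) : {ffun C -> bool * bool} :=
  [ffun i => (w (i, ord0), w (i, ord_max))].

Lemma gmap_bij : bijective gmap.
Proof.
exists ginv.
  by move=> u; apply/ffunP => i; rewrite !ffunE /=; case: (u i).
move=> w; apply/ffunP => -[i k]; rewrite !ffunE /=.
case: k => [[|[|m]] Hk] //=; congr (w (i, _)); exact: val_inj.
Qed.

Lemma bern_LHS (p : C -> R) (D : {set config C}) :
  bern_prod p D = mu (fw p) (fun w : config C => (w \in D)%:R).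
Proof.
rewrite /bern_prod /mu big_mkcond /=; apply: eq_bigr => w _.
by case: (w \in D); rewrite ?mul1r ?mul0r.
Qed.

Lemma rho_RHS (rho : C -> bool -> bool -> R) (E1 E2 : {set config C}) :
  prod_rho rho (prod_event E1 E2) = RHS rho E1 E2.
Proof.
rewrite /prod_rho (reindex gmap); last exact: onW_bij gmap_bij.
rewrite /RHS /mu big_mkcond /=; apply: eq_bigr => u _.
rewrite inE.
have -> : proj1c (gmap u) = fstc u by apply/ffunP => i; rewrite !ffunE.
have -> : proj2c (gmap u) = sndc u by apply/ffunP => i; rewrite !ffunE.
case: (_ && _); rewrite ?mul1r ?mul0r //.
by apply: eq_bigr => i _; rewrite !ffunE /rh.
Qed.

End Final.

Theorem proposition5p2 (R : realFieldType) (C : finType) (p : C -> R)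
  (E1 E2 : {set config C}) (rho : C -> bool -> bool -> R) :
  (forall i, 0 <= p i <= 1) ->
  increasing E1 -> increasing E2 ->
  (forall i, is_prob2 (rho i)) ->
  (* first marginal is Bernoulli(q) with q >= p i *)
  (forall i, p i <= rho i true true + rho i true false) ->
  (* second marginal is Bernoulli(q') with q' >= p i *)
  (forall i, p i <= rho i true true + rho i false true) ->
  bern_prod p (disj_occ E1 E2) <= prod_rho rho (prod_event E1 E2).
Proof.
move=> hp i1 i2 hr m1 m2.
rewrite bern_LHS rho_RHS.
apply: (main hp hr m1 m2 (leqnn #|[set: C]|)) => // w w' ag;
  by have -> : w = w' by apply/ffunP => j; apply: ag; rewrite in_setT.
Qed.
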